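(* Let $(X,\varphi)$ be a Smale space and $R\subset X$ a closed rectangle. Then the maps from $(R,d)$ to $(\mathcal K(R),d_H)$ given by $x\mapsto X^s(x,R)$ and $x\mapsto X^u(x,R)$ are continuous. In particular, the maps $R\ni x\mapsto\operatorname{diam}(X^s(x,R))$ and $R\ni x\mapsto\operatorname{diam}(X^u(x,R))$ are continuous.
   Context: A Smale space $(X,\varphi)$: compact metric space $(X,d)$, homeomorphism $\varphi$, constants $\varepsilon_X>0,\lambda_X>1$ and a continuous bracket $[\cdot,\cdot]$ on $\{(x,y):d(x,y)\le\varepsilon_X\}$ with $[x,x]=x$, $[x,[y,z]]=[x,z]$, $[[x,y],z]=[x,z]$, $\varphi([x,y])=[\varphi(x),\varphi(y)]$ (whenever defined), such that $\varphi$ contracts distances by $\lambda_X^{-1}$ on local stable sets $X^s(x,\varepsilon)=\{y:d(x,y)<\varepsilon,[x,y]=y\}$ and $\varphi^{-1}$ contracts by $\lambda_X^{-1}$ on local unstable sets $X^u(x,\varepsilon)=\{y:d(x,y)<\varepsilon,[y,x]=y\}$, $0<\varepsilon\le\varepsilon_X$. Fix $\varepsilon_X'\in(0,\varepsilon_X/2]$ such that $d(x,y)\le\varepsilon_X'$ implies $d(x,[x,y]),d(y,[x,y])<\varepsilon_X/2$. A rectangle is a nonempty $R\subset X$ with $\operatorname{diam}R\le\varepsilon_X'$ and $[x,y]\in R$ for all $x,y\in R$; for $x\in R$, $X^s(x,R)=X^s(x,2\varepsilon_X')\cap R$ and $X^u(x,R)=X^u(x,2\varepsilon_X')\cap R$.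 $\mathcal K(R)$ is the set of compact subsets of $R$ and $d_H$ the Hausdorff metric on it. *)

(* Defs.v *)
From Stdlib Require Import Reals Lra List Classical.
From Coquelicot Require Import Coquelicot.
Open Scope R_scope.

(** A Smale space (X, phi) on a carrier type X, with metric d, homeomorphism phi
    (inverse phi_inv), constants eps_X > 0, lam_X > 1 and bracket [x,y] = br x y,
    which is only meaningful on {(x,y) | d x y <= eps_X} (outside it, its value is
    irrelevant: all axioms are stated only where the bracket is defined). *)
Record SmaleSpace (X : Type) := {
  d : X -> X -> R;
  phi : X -> X;
  phi_inv : X -> X;
  epsX : R;
  lamX : R;
  br : X -> X -> X;
  d_nonneg : forall x y, 0 <= d x y;
  d_eq0 : forall x y, d x y = 0 <-> x = y;
  d_sym : forall x y, d x y = d y x;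
  d_tri : forall x y z, d x z <= d x y + d y z;
  X_compact : forall (I : Type) (U : I -> X -> Prop),
      (forall i x, U i x -> exists e, 0 < e /\ forall y, d x y < e -> U i y) ->
      (forall x, exists i, U i x) ->
      exists l : list I, forall x, exists i, In i l /\ U i x;
  phi_invK : forall x, phi_inv (phi x) = x;
  phiK : forall x, phi (phi_inv x) = x;
  phi_cont : forall x e, 0 < e -> exists del, 0 < del /\
      forall y, d x y < del -> d (phi x) (phi y) < e;
  phi_inv_cont : forall x e, 0 < e -> exists del, 0 < del /\
      forall y, d x y < del -> d (phi_inv x) (phi_inv y) < e;
  epsX_pos : 0 < epsX;
  lamX_gt1 : 1 < lamX;
  br_cont : forall x y, d x y <= epsX -> forall e, 0 < e -> exists del, 0 < del /\
      forall x' y', d x' y' <= epsX -> d x x' < del -> d y y' < del ->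
      d (br x y) (br x' y') < e;
  br_xx : forall x, br x x = x;
  br_l : forall x y z, d y z <= epsX -> d x (br y z) <= epsX -> d x z <= epsX ->
      br x (br y z) = br x z;
  br_r : forall x y z, d x y <= epsX -> d (br x y) z <= epsX -> d x z <= epsX ->
      br (br x y) z = br x z;
  br_phi : forall x y, d x y <= epsX -> d (phi x) (phi y) <= epsX ->
      phi (br x y) = br (phi x) (phi y);
  contr_s : forall x e y z, 0 < e -> e <= epsX ->
      (d x y < e /\ br x y = y) -> (d x z < e /\ br x z = z) ->
      d (phi y) (phi z) <= / lamX * d y z;
  contr_u : forall x e y z, 0 < e -> e <= epsX ->
      (d x y < e /\ br y x = y) -> (d x z < e /\ br z x = z) ->
      d (phi_inv y) (phi_inv z) <= / lamX * d y z
}.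

Arguments d {X} s x y.
Arguments phi {X} s x.
Arguments phi_inv {X} s x.
Arguments epsX {X} s.
Arguments lamX {X} s.
Arguments br {X} s x y.

Section Defs.
Context {X : Type} (S : SmaleSpace X).

Definition Xs (x : X) (e : R) : X -> Prop := fun y => d S x y < e /\ br S x y = y.
Definition Xu (x : X) (e : R) : X -> Prop := fun y => d S x y < e /\ br S y x = y.

Definition admissible_eps' (e' : R) : Prop :=
  0 < e' /\ e' <= epsX S / 2 /\
  forall x y, d S x y <= e' -> d S x (br S x y) < epsX S / 2 /\ d S y (br S x y) < epsX S / 2.

Definition rectangle (e' : R) (Rs : X -> Prop) : Prop :=
  (exists x, Rs x) /\
  (forall x y, Rs x -> Rs y -> d S x y <= e') /\
  (forall x y, Rs x -> Rs y -> Rs (br S x y)).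

Definition is_open (U : X -> Prop) : Prop :=
  forall x, U x -> exists e, 0 < e /\ forall y, d S x y < e -> U y.

Definition is_closed (A : X -> Prop) : Prop := is_open (fun x => ~ A x).

Definition is_compact (K : X -> Prop) : Prop :=
  forall (I : Type) (U : I -> X -> Prop),
    (forall i, is_open (U i)) ->
    (forall x, K x -> exists i, U i x) ->
    exists l : list I, forall x, K x -> exists i, In i l /\ U i x.

Definition XsR (e' : R) (Rs : X -> Prop) (x : X) : X -> Prop :=
  fun y => Xs x (2 * e') y /\ Rs y.
Definition XuR (e' : R) (Rs : X -> Prop) (x : X) : X -> Prop :=
  fun y => Xu x (2 * e') y /\ Rs y.

(** Distance from a point to a set, excess, Hausdorff distance, diameter
    (all finite for nonempty compact sets). *)
Definition dist_set (a : X) (B : X -> Prop) : R :=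
  real (Glb_Rbar (fun r => exists b, B b /\ r = d S a b)).
Definition excess (A B : X -> Prop) : R :=
  real (Lub_Rbar (fun r => exists a, A a /\ r = dist_set a B)).
Definition hausdorff (A B : X -> Prop) : R := Rmax (excess A B) (excess B A).
Definition diam (A : X -> Prop) : R :=
  real (Lub_Rbar (fun r => exists a b, A a /\ A b /\ r = d S a b)).

Definition cont_on_H (Rs : X -> Prop) (F : X -> X -> Prop) : Prop :=
  forall x, Rs x -> forall e, 0 < e -> exists del, 0 < del /\
    forall y, Rs y -> d S x y < del -> hausdorff (F x) (F y) < e.
Definition cont_on_R (Rs : X -> Prop) (f : X -> R) : Prop :=
  forall x, Rs x -> forall e, 0 < e -> exists del, 0 < del /\
    forall y, Rs y -> d S x y < del -> Rabs (f x - f y) < e.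

End Defs.

(* Main.v *)
Require Import Defs.
From Stdlib Require Import Reals Lra List Classical.
From Coquelicot Require Import Coquelicot.
Open Scope R_scope.

Lemma dxx {X} (S : SmaleSpace X) x : d S x x = 0.
Proof. apply (proj2 (d_eq0 X S x x)); reflexivity. Qed.
Lemma dsym {X} (S : SmaleSpace X) x y : d S x y = d S y x.
Proof. apply d_sym. Qed.
Lemma dtri {X} (S : SmaleSpace X) x y z : d S x z <= d S x y + d S y z.
Proof. apply d_tri. Qed.
Lemma dpos {X} (S : SmaleSpace X) x y : 0 <= d S x y.
Proof. apply d_nonneg. Qed.

Lemma lub_le (E : R -> Prop) (M : R) : 0 <= M -> (forall r, E r -> r <= M) ->
  real (Lub_Rbar E) <= M.
Proof.
  intros HM H. destruct (Lub_Rbar_correct E) as [Hub Hl].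
  assert (Hle : Rbar_le (Lub_Rbar E) M). { apply Hl. intros r Er. simpl. apply H; auto. }
  remember (Lub_Rbar E) as l. destruct l; simpl in *; auto; contradiction.
Qed.

Lemma lub_ge (E : R -> Prop) (M r : R) : E r -> (forall r, E r -> r <= M) ->
  r <= real (Lub_Rbar E).
Proof.
  intros Er H. destruct (Lub_Rbar_correct E) as [Hub Hl].
  assert (H1 : Rbar_le r (Lub_Rbar E)) by (apply Hub; auto).
  assert (H2 : Rbar_le (Lub_Rbar E) M). { apply Hl. intros r' Er'. simpl. auto. }
  remember (Lub_Rbar E) as l. destruct l; simpl in *; auto; contradiction.
Qed.

Lemma glb_le (E : R -> Prop) r : (forall r, E r -> 0 <= r) -> E r ->
  real (Glb_Rbar E) <= r.
Proof.
  intros H Er. destruct (Glb_Rbar_correct E) as [Hlb Hg].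
  assert (H1 : Rbar_le (Glb_Rbar E) r) by (apply Hlb; auto).
  assert (H2 : Rbar_le 0 (Glb_Rbar E)). { apply Hg. intros r' Er'. simpl. auto. }
  remember (Glb_Rbar E) as l. destruct l; simpl in *; auto; try contradiction.
Qed.

Fixpoint somes {I} (l : list (option I)) : list I :=
  match l with
  | nil => nil
  | Some i :: t => i :: somes t
  | None :: t => somes t
  end.

Lemma in_somes {I} (l : list (option I)) i : In (Some i) l -> In i (somes l).
Proof.
  induction l as [|[j|] t IH]; simpl; intros H.
  - contradiction.
  - destruct H as [H|H]; [injection H; intros ->; left; auto | right; auto].
  - destruct H as [H|H]; [discriminate|auto].
Qed.

Lemma closed_compact {X} (S : SmaleSpace X) K : is_closed S K -> is_compact S K.
Proof.
  intros HK I U HU Hcov.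
  destruct (X_compact X S (option I)
     (fun o x => match o with Some i => U i x | None => ~ K x end)) as [l Hl].
  - intros [i|] x Hx. apply HU; auto. apply HK; auto.
  - intros x. destruct (classic (K x)) as [Kx|nK].
    + destruct (Hcov x Kx) as [i Hi]. exists (Some i); auto.
    + exists None; auto.
  - exists (somes l). intros x Kx. destruct (Hl x) as [[i|] [Hin Hi]].
    + exists i; split; auto; apply in_somes; auto.
    + contradiction.
Qed.

Record good {X} (S : SmaleSpace X) (e' : R) (Rs : X -> Prop) (b : X -> X -> X) : Prop := {
  g_pos : 0 < e';
  g_diam : forall x y, Rs x -> Rs y -> d S x y <= e';
  g_cl : is_closed S Rs;
  g_cont : forall x y, Rs x -> Rs y -> forall e, 0 < e -> exists del, 0 < del /\
     forall x' y', Rs x' -> Rs y' -> d S x x' < del -> d S y y' < del ->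
     d S (b x y) (b x' y') < e;
  g_idem : forall x z, Rs x -> Rs z -> b x (b x z) = b x z;
  g_rect : forall x z, Rs x -> Rs z -> Rs (b x z);
  g_xx : forall x, b x x = x
}.

Definition G {X} (S : SmaleSpace X) (e' : R) (Rs : X -> Prop) (b : X -> X -> X) x y :=
  (d S x y < 2 * e' /\ b x y = y) /\ Rs y.

Lemma G_closed {X} (S : SmaleSpace X) e' Rs b (H : good S e' Rs b) x :
  Rs x -> is_closed S (G S e' Rs b x).
Proof.
  intros Rx y Hy. destruct (classic (Rs y)) as [Ry|nRy].
  - assert (Hne : b x y <> y).
    { intros Heq. apply Hy. split; auto. split; auto.
      pose proof (g_diam _ _ _ _ H x y Rx Ry). pose proof (g_pos _ _ _ _ H). lra. }
    set (eta := d S (b x y) y).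
    assert (Heta : 0 < eta).
    { destruct (dpos S (b x y) y) as [h|h]; auto. exfalso; apply Hne.
      apply (proj1 (d_eq0 X S _ _)). unfold eta in h; auto. }
    destruct (g_cont _ _ _ _ H x y Rx Ry (eta/2)) as [del [Hdel Hc]]. lra.
    exists (Rmin del (eta/2)). split. apply Rmin_pos; lra.
    intros y' Hyy' [[_ Heq] Ry'].
    assert (A : d S (b x y) (b x y') < eta/2).
    { apply Hc; auto. rewrite dxx; auto. eapply Rlt_le_trans. apply Hyy'. apply Rmin_l. }
    rewrite Heq in A.
    assert (B : d S y y' < eta/2). { eapply Rlt_le_trans. apply Hyy'. apply Rmin_r. }
    pose proof (dtri S (b x y) y' y). rewrite (dsym S y' y) in H0.
    unfold eta in *. lra.
  - destruct (g_cl _ _ _ _ H y nRy) as [e [He Hb]]. exists e. split; auto.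
    intros y' H' [_ Ry']. apply (Hb y' H'); auto.
Qed.

Lemma unif {X} (S : SmaleSpace X) e' Rs b (H : good S e' Rs b) x :
  Rs x -> forall e, 0 < e -> exists del, 0 < del /\
  forall z y, Rs z -> Rs y -> d S x y < del -> d S (b x z) (b y z) < e.
Proof.
  intros Rx e He.
  pose (U := fun (p : X * R) w => Rs (fst p) /\ 0 < snd p /\
    (forall x' y', Rs x' -> Rs y' -> d S x x' < snd p -> d S (fst p) y' < snd p ->
       d S (b x (fst p)) (b x' y') < e/2) /\ d S (fst p) w < snd p / 2).
  assert (HU : forall p, is_open S (U p)).
  { intros p w [Hz [Hd [Hc Hw]]]. exists (snd p/2 - d S (fst p) w). split. lra.
    intros y Hy. unfold U. repeat split; auto.
    pose proof (dtri S (fst p) w y). lra. }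
  assert (Hcov : forall w, Rs w -> exists p, U p w).
  { intros w Rw. destruct (g_cont _ _ _ _ H x w Rx Rw (e/2)) as [del [Hdel Hc]]. lra.
    exists (w, del). unfold U; simpl; repeat split; auto. rewrite dxx; lra. }
  destruct (closed_compact S Rs (g_cl _ _ _ _ H) (X*R)%type U HU Hcov) as [l Hl].
  assert (Hm : exists del, 0 < del /\ forall p, In p l -> (exists w, U p w) -> del <= snd p / 2).
  { clear Hl. induction l as [|p t IH].
    - exists 1; split; [lra| intros p []].
    - destruct IH as [del [Hd Hp]].
      destruct (classic (exists w, U p w)) as [[w Hw]|Hn].
      + exists (Rmin del (snd p / 2)). destruct Hw as [_ [Hp0 _]]. split.
        apply Rmin_pos; lra.
        intros q [<-|Hq] Hex. apply Rmin_r. eapply Rle_trans. apply Rmin_l. apply Hp; auto.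
      + exists del. split; auto. intros q [<-|Hq] Hex. contradiction. apply Hp; auto. }
  destruct Hm as [del [Hd Hm]]. exists del. split; auto. intros z y Rz Ry Hxy.
  destruct (Hl z Rz) as [p [Hin Hp]]. pose proof (Hm p Hin (ex_intro _ z Hp)) as Hle.
  destruct Hp as [Rp [Hp0 [Hc Hpz]]].
  assert (A1 : d S (b x (fst p)) (b y z) < e/2) by (apply Hc; auto; lra).
  assert (A2 : d S (b x (fst p)) (b x z) < e/2) by (apply Hc; auto; try rewrite dxx; lra).
  pose proof (dtri S (b x z) (b x (fst p)) (b y z)).
  rewrite (dsym S (b x z) (b x (fst p))) in H0. lra.
Qed.

Lemma G_mem {X} (S : SmaleSpace X) e' Rs b (H : good S e' Rs b) y a :
  Rs y -> Rs a -> G S e' Rs b y (b y a).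
Proof.
  intros Ry Ra. pose proof (g_rect _ _ _ _ H y a Ry Ra).
  pose proof (g_diam _ _ _ _ H y (b y a) Ry H0). pose proof (g_pos _ _ _ _ H).
  split; auto. split. lra. apply (g_idem _ _ _ _ H); auto.
Qed.

Lemma gen_H {X} (S : SmaleSpace X) e' Rs b (H : good S e' Rs b) :
  cont_on_H S Rs (G S e' Rs b).
Proof.
  intros x Rx e He. destruct (unif S e' Rs b H x Rx (e/2)) as [del [Hd Hu]]. lra.
  exists del. split; auto. intros y Ry Hxy. unfold hausdorff.
  assert (E1 : excess S (G S e' Rs b x) (G S e' Rs b y) <= e/2).
  { unfold excess. apply lub_le. lra. intros r [a [Ga ->]]. unfold dist_set.
    destruct Ga as [[_ Ha] Ra].
    eapply Rle_trans. apply glb_le with (r := d S a (b y a)).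
    intros r [c [_ ->]]; apply dpos. exists (b y a); split; auto. apply G_mem; auto.
    left. replace (d S a (b y a)) with (d S (b x a) (b y a)) by (rewrite Ha; reflexivity).
    apply Hu; auto. }
  assert (E2 : excess S (G S e' Rs b y) (G S e' Rs b x) <= e/2).
  { unfold excess. apply lub_le. lra. intros r [a [Ga ->]]. unfold dist_set.
    destruct Ga as [[_ Ha] Ra].
    eapply Rle_trans. apply glb_le with (r := d S a (b x a)).
    intros r [c [_ ->]]; apply dpos. exists (b x a); split; auto. apply G_mem; auto.
    left. replace (d S a (b x a)) with (d S (b x a) (b y a))
      by (rewrite Ha; apply dsym).
    apply Hu; auto. }
  unfold Rmax; destruct Rle_dec; lra.
Qed.

Lemma diam_le {X} (S : SmaleSpace X) e' Rs b (H : good S e' Rs b) x y eta :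
  Rs x -> Rs y -> 0 < eta ->
  (forall z, Rs z -> d S (b x z) (b y z) < eta) ->
  diam S (G S e' Rs b x) <= diam S (G S e' Rs b y) + 2 * eta.
Proof.
  intros Rx Ry Heta Hu.
  assert (Bd : forall a c, G S e' Rs b y a -> G S e' Rs b y c -> d S a c <= e').
  { intros a c [_ Ra] [_ Rc]. apply (g_diam _ _ _ _ H); auto. }
  assert (Hdy : forall a c, G S e' Rs b y a -> G S e' Rs b y c ->
     d S a c <= diam S (G S e' Rs b y)).
  { intros a c Ga Gc. unfold diam. apply lub_ge with (M := e').
    exists a, c; auto. intros r [a' [c' [Ga' [Gc' ->]]]]. apply Bd; auto. }
  assert (H0 : 0 <= diam S (G S e' Rs b y)).
  { pose proof (G_mem S e' Rs b H y y Ry Ry) as Gy. rewrite (g_xx _ _ _ _ H) in Gy.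
    rewrite <- (dxx S y). apply Hdy; auto. }
  unfold diam at 1. apply lub_le. lra.
  intros r [a [c [[[_ Ha] Ra] [[[_ Hc] Rc] ->]]]].
  pose proof (dtri S a (b y a) c). pose proof (dtri S (b y a) (b y c) c).
  pose proof (Hdy (b y a) (b y c) (G_mem S e' Rs b H y a Ry Ra) (G_mem S e' Rs b H y c Ry Rc)).
  pose proof (Hu a Ra). pose proof (Hu c Rc). rewrite Ha in H4. rewrite Hc in H5.
  rewrite (dsym S (b y c) c) in H2. lra.
Qed.

Lemma gen_R {X} (S : SmaleSpace X) e' Rs b (H : good S e' Rs b) :
  cont_on_R S Rs (fun x => diam S (G S e' Rs b x)).
Proof.
  intros x Rx e He. destruct (unif S e' Rs b H x Rx (e/4)) as [del [Hd Hu]]. lra.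
  exists del. split; auto. intros y Ry Hxy.
  pose proof (diam_le S e' Rs b H x y (e/4) Rx Ry ltac:(lra) (fun z Rz => Hu z y Rz Ry Hxy)).
  assert (Hu' : forall z, Rs z -> d S (b y z) (b x z) < e/4).
  { intros z Rz. rewrite dsym. apply Hu; auto. }
  pose proof (diam_le S e' Rs b H y x (e/4) Ry Rx ltac:(lra) Hu').
  apply Rabs_def1; lra.
Qed.

Theorem lemma6p14 (X : Type) (S : SmaleSpace X) (e' : R) (Rs : X -> Prop) :
  admissible_eps' S e' ->
  rectangle S e' Rs ->
  is_closed S Rs ->
  (* the maps land in K(R) *)
  (forall x, Rs x ->
     is_compact S (XsR S e' Rs x) /\ (forall y, XsR S e' Rs x y -> Rs y) /\
     is_compact S (XuR S e' Rs x) /\ (forall y, XuR S e' Rs x y -> Rs y)) /\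
  (* continuity into (K(R), d_H) *)
  cont_on_H S Rs (XsR S e' Rs) /\
  cont_on_H S Rs (XuR S e' Rs) /\
  (* continuity of the diameters *)
  cont_on_R S Rs (fun x => diam S (XsR S e' Rs x)) /\
  cont_on_R S Rs (fun x => diam S (XuR S e' Rs x)).
Proof.
  intros [Hpos [Hle _]] [_ [Hdiam Hrect]] Hcl.
  pose proof (epsX_pos X S) as Heps.
  assert (Hd : forall x y, Rs x -> Rs y -> d S x y <= epsX S).
  { intros x y Rx Ry. pose proof (Hdiam x y Rx Ry). lra. }
  assert (Gs : good S e' Rs (br S)).
  { constructor; auto.
    - intros x y Rx Ry e He.
      destruct (br_cont X S x y (Hd x y Rx Ry) e He) as [del [Hdel Hc]].
      exists del; split; [exact Hdel|]. intros x' y' Rx' Ry'. apply Hc; auto.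
    - intros x z Rx Rz. apply br_l; auto.
    - intros x. apply br_xx. }
  assert (Gu : good S e' Rs (fun x y => br S y x)).
  { constructor; auto.
    - intros x y Rx Ry e He.
      destruct (br_cont X S y x (Hd y x Ry Rx) e He) as [del [Hdel Hc]].
      exists del; split; [exact Hdel|]. intros x' y' Rx' Ry' H1 H2. apply Hc; auto.
    - intros x z Rx Rz. apply br_r; auto.
    - intros x. apply br_xx. }
  split; [|split; [|split; [|split]]].
  - intros x Rx. split; [|split; [|split]].
    + exact (closed_compact S _ (G_closed S e' Rs _ Gs x Rx)).
    + intros y [_ Ry]; auto.
    + exact (closed_compact S _ (G_closed S e' Rs _ Gu x Rx)).
    + intros y [_ Ry]; auto.
  - exact (gen_H S e' Rs _ Gs).
  - exact (gen_H S e' Rs _ Gu).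
  - exact (gen_R S e' Rs _ Gs).
  - exact (gen_R S e' Rs _ Gu).
Qed.
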